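(* Let $\mathscr{H}$ be a complex Hilbert space, $N(\cdot)$ a norm on $\mathbb{B}(\mathscr{H})$, and $B,C\in\mathbb{B}(\mathscr{H})$. Then for every $\theta\in\mathbb{R}$, $$\frac12 w_N(B+e^{i\theta}C)+\frac12|w_N(B)-w_N(C)|\leq w_{(N,e)}(B,C).$$
   Context: For $T\in\mathbb{B}(\mathscr{H})$: $\Re(T)=\frac12(T+T^* )$ and $w_N(T)=\sup_{\theta\in\mathbb{R}}N(\Re(e^{i\theta}T))$. For $B,C\in\mathbb{B}(\mathscr{H})$, $w_{(N,e)}(B,C)=\sup_{\lambda_1,\lambda_2\in\mathbb{C},\ |\lambda_1|^2+|\lambda_2|^2\leq 1}\sup_{\theta\in\mathbb{R}} N(\Re(e^{i\theta}(\lambda_1B+\lambda_2C)))$. *)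

(* Defs.v *)
From HB Require Import structures.
From mathcomp Require Import all_boot all_order all_algebra.
From mathcomp Require Import all_classical all_reals.
From mathcomp Require Import trigo.
From mathcomp Require Import complex.
Set Implicit Arguments. Unset Strict Implicit. Unset Printing Implicit Defensive.
Import Order.TTheory GRing.Theory Num.Theory.
Local Open Scope ring_scope.
Local Open Scope classical_set_scope.

Section Defs.
Variable R : realType.
Local Notation C := (R[i]).
Variable V : lmodType C.
Variable ip : V -> V -> C.

Definition is_inner_product : Prop :=
  [/\ (forall (a : C) (x y z : V), ip (a *: x + y) z = a * ip x z + ip y z),
      (forall x y : V, ip y x = (ip x y)^*),
      (forall x : V, 0 <= ip x x) &
      (forall x : V, ip x x = 0 -> x = 0)].

Definition hnorm (x : V) : R := Num.sqrt (complex.Re (ip x x)).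

Definition ip_complete : Prop :=
  forall u : nat -> V,
    (forall e : R, 0 < e -> exists n : nat, forall m k : nat,
        (n <= m)%N -> (n <= k)%N -> hnorm (u m - u k) < e) ->
    exists x : V, forall e : R, 0 < e -> exists n : nat, forall m : nat,
        (n <= m)%N -> hnorm (u m - x) < e.

Definition is_hilbert : Prop := is_inner_product /\ ip_complete.

Definition bounded_op (T : V -> V) : Prop :=
  (forall (a : C) (x y : V), T (a *: x + y) = a *: T x + T y) /\
  exists M : R, forall x : V, hnorm (T x) <= M * hnorm x.

Definition opadd (S T : V -> V) : V -> V := fun x => S x + T x.
Definition opscale (a : C) (T : V -> V) : V -> V := fun x => a *: T x.

Definition is_op_norm (N : (V -> V) -> R) : Prop :=
  [/\ (forall T, bounded_op T -> 0 <= N T),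
      (forall T, bounded_op T -> N T = 0 -> T = (fun _ => 0)),
      (forall (a : C) T, bounded_op T -> N (opscale a T) = complex.Re `|a| * N T) &
      (forall S T, bounded_op S -> bounded_op T -> N (opadd S T) <= N S + N T)].

Definition is_adjoint (T S : V -> V) : Prop :=
  forall x y : V, ip (T x) y = ip x (S y).

Definition adjoint (T : V -> V) : V -> V :=
  match pselect (exists S, is_adjoint T S) with
  | left h => projT1 (cid h)
  | right _ => fun _ => 0
  end.

Definition ReOp (T : V -> V) : V -> V :=
  fun x => (2%:R : C)^-1 *: (T x + adjoint T x).

Definition expi (t : R) : C := (cos t +i* sin t)%C.

Definition wN (N : (V -> V) -> R) (T : V -> V) : R :=
  sup [set N (ReOp (opscale (expi t) T)) | t in [set: R]].

Definition wNe (N : (V -> V) -> R) (B C' : V -> V) : R :=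
  sup [set r : R | exists (l1 l2 : C) (t : R),
         `|l1| ^+ 2 + `|l2| ^+ 2 <= 1 /\
         r = N (ReOp (opscale (expi t) (opadd (opscale l1 B) (opscale l2 C'))))].

End Defs.

(* Main.v *)
Require Import Defs.
From HB Require Import structures.
From mathcomp Require Import all_boot all_order all_algebra.
From mathcomp Require Import all_classical all_reals.
From mathcomp Require Import trigo.
From mathcomp Require Import complex.
From mathcomp Require Import ring lra.
Import Order.TTheory GRing.Theory Num.Theory.
Local Open Scope ring_scope.

Section Cplx.
Context {R : realType}.
Implicit Types a b : R[i].
Lemma cReM a b : complex.Re (a * b) = complex.Re a * complex.Re b - complex.Im a * complex.Im b.
Proof. by case: a; case: b. Qed.
Lemma cImM a b : complex.Im (a * b) = complex.Re a * complex.Im b + complex.Im a * complex.Re b.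
Proof. by case: a; case: b. Qed.
Lemma cReD a b : complex.Re (a + b) = complex.Re a + complex.Re b.
Proof. by case: a; case: b. Qed.
Lemma cImD a b : complex.Im (a + b) = complex.Im a + complex.Im b.
Proof. by case: a; case: b. Qed.
Lemma cReN a : complex.Re (- a) = - complex.Re a.
Proof. by case: a. Qed.
Lemma cImN a : complex.Im (- a) = - complex.Im a.
Proof. by case: a. Qed.
Lemma cReJ a : complex.Re (Num.conj a) = complex.Re a.
Proof. by case: a. Qed.
Lemma cImJ a : complex.Im (Num.conj a) = - complex.Im a.
Proof. by case: a. Qed.
Lemma cReC (c : R) : complex.Re (c%:C)%C = c. Proof. by []. Qed.
Lemma cImC (c : R) : complex.Im (c%:C)%C = 0. Proof. by []. Qed.
Lemma cRe1 : complex.Re (1 : R[i]) = 1. Proof. by []. Qed.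
Lemma cIm1 : complex.Im (1 : R[i]) = 0. Proof. by []. Qed.
Lemma cRe0 : complex.Re (0 : R[i]) = 0. Proof. by []. Qed.
Lemma cIm0 : complex.Im (0 : R[i]) = 0. Proof. by []. Qed.
Lemma cReI : complex.Re ('i%C : R[i]) = 0. Proof. by []. Qed.
Lemma cImI : complex.Im ('i%C : R[i]) = 1. Proof. by []. Qed.
Lemma cext a b : complex.Re a = complex.Re b -> complex.Im a = complex.Im b -> a = b.
Proof. by case: a; case: b => ? ? ? ? /= -> ->. Qed.
Lemma cle a b : (a <= b) = (complex.Im b == complex.Im a) && (complex.Re a <= complex.Re b).
Proof. by case: a; case: b. Qed.
Lemma cnorm a : `|a| = ((Num.sqrt (complex.Re a ^+2 + complex.Im a ^+ 2))%:C)%C.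
Proof. by case: a. Qed.
Lemma cReN_norm a : complex.Re `|a| = Num.sqrt (complex.Re a ^+2 + complex.Im a ^+ 2).
Proof. by rewrite cnorm. Qed.
End Cplx.

Ltac cE := rewrite ?(cReM, cImM, cReD, cImD, cReN, cImN, cReJ, cImJ, cReC, cImC, cRe1, cIm1, cRe0, cIm0, cReI, cImI).

Lemma sq_le (R : realType) (P t : R) : t ^+ 2 <= P ^+ 2 -> 0 <= P -> t <= P.
Proof. nra. Qed.

Definition eps {R : realType} (n : nat) : R := (n.+1%:R)^-1.
Lemma eps_gt0 {R : realType} n : 0 < @eps R n.
Proof. by rewrite /eps invr_gt0 ltr0Sn. Qed.
Lemma eps_le {R : realType} {m n : nat} : (n <= m)%N -> @eps R m <= eps n.
Proof. by move=> h; rewrite /eps lef_pV2 ?posrE ?ltr0Sn // ler_nat. Qed.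
Lemma eps_small {R : realType} (e : R) : 0 < e -> exists n, eps n < e.
Proof.
move=> he; have h0 : 0 <= e^-1 by rewrite invr_ge0 ltW.
exists (Num.Def.archi_bound e^-1).
rewrite /eps invf_plt ?posrE ?ltr0Sn //.
apply: lt_trans (archi_boundP h0) _; by rewrite ltr_nat.
Qed.

Lemma sq_le2 (R : realType) (a t : R) : a ^+ 2 <= t * a -> 0 <= t -> 0 <= a -> a <= t.
Proof. nra. Qed.

Section IP.
Context {R : realType} {V : lmodType R[i]} (ip : V -> V -> R[i]).
Hypothesis HI : is_inner_product ip.
Local Notation r x y := (complex.Re (ip x y)).
Local Notation q x := (complex.Re (ip x x)).
Local Notation hn := (hnorm ip).

Lemma ipL a x y z : ip (a *: x + y) z = a * ip x z + ip y z.
Proof. by move: HI; rewrite /is_inner_product => -[h _ _ _]; apply: h. Qed.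
Lemma ipC x y : ip y x = Num.conj (ip x y).
Proof. by move: HI; rewrite /is_inner_product => -[_ h _ _]; apply: h. Qed.
Lemma ip_ge0 x : 0 <= ip x x.
Proof. by move: HI; rewrite /is_inner_product => -[_ _ h _]; apply: h. Qed.
Lemma ip_def x : ip x x = 0 -> x = 0.
Proof. by move: HI; rewrite /is_inner_product => -[_ _ _ h]; apply: h. Qed.

Lemma ip0l z : ip 0 z = 0.
Proof.
have := ipL 1 0 0 z; rewrite scaler0 addr0 mul1r -{1}[ip 0 z]addr0.
by move/addrI.
Qed.
Lemma ipDl x y z : ip (x + y) z = ip x z + ip y z.
Proof. by rewrite -[x]scale1r ipL mul1r scale1r. Qed.
Lemma ipZl a x z : ip (a *: x) z = a * ip x z.
Proof. by rewrite -[a *: x]addr0 ipL ip0l addr0. Qed.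
Lemma ipNl x z : ip (- x) z = - ip x z.
Proof. by rewrite -scaleN1r ipZl mulN1r. Qed.
Lemma ipBl x y z : ip (x - y) z = ip x z - ip y z.
Proof. by rewrite ipDl ipNl. Qed.
Lemma ipDr x y z : ip z (x + y) = ip z x + ip z y.
Proof. by rewrite ipC ipDl rmorphD [ip z x]ipC [ip z y]ipC. Qed.
Lemma ipZr a x z : ip z (a *: x) = Num.conj a * ip z x.
Proof. by rewrite ipC ipZl rmorphM [ip z x]ipC. Qed.
Lemma ipNr x z : ip z (- x) = - ip z x.
Proof. by rewrite ipC ipNl rmorphN [ip z x]ipC. Qed.
Lemma ipBr x y z : ip z (x - y) = ip z x - ip z y.
Proof. by rewrite ipDr ipNr. Qed.
Lemma ip0r z : ip z 0 = 0.
Proof. by rewrite -(scale0r z) ipZr rmorph0 mul0r. Qed.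

Lemma ip_diag x : ip x x = (q x)%:C%C.
Proof.
have := ip_ge0 x; rewrite cle => /andP[/eqP h _].
by apply: cext; rewrite ?cReC ?cImC // -h.
Qed.
Lemma q_ge0 x : 0 <= q x.
Proof. by have := ip_ge0 x; rewrite cle => /andP[_]; rewrite cRe0. Qed.
Lemma q_eq0 x : q x = 0 -> x = 0.
Proof. by move=> h; apply: ip_def; rewrite ip_diag h. Qed.

Lemma rsym x y : r y x = r x y.
Proof. by rewrite ipC cReJ. Qed.
Lemma rDl x y z : r (x + y) z = r x z + r y z.
Proof. by rewrite ipDl cReD. Qed.
Lemma rDr x y z : r z (x + y) = r z x + r z y.
Proof. by rewrite ipDr cReD. Qed.
Lemma rNl x z : r (- x) z = - r x z.
Proof. by rewrite ipNl cReN. Qed.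
Lemma rNr x z : r z (- x) = - r z x.
Proof. by rewrite ipNr cReN. Qed.
Lemma rZl (c : R) x z : r ((c%:C)%C *: x) z = c * r x z.
Proof. by rewrite ipZl cReM cReC cImC mul0r subr0. Qed.
Lemma rZr (c : R) x z : r z ((c%:C)%C *: x) = c * r z x.
Proof. by rewrite ipZr cReM cReJ cImJ cReC cImC oppr0 mul0r subr0. Qed.

Lemma qD x y : q (x + y) = q x + 2 * r x y + q y.
Proof. rewrite rDl !rDr (rsym x y); ring. Qed.
Lemma qB x y : q (x - y) = q x - 2 * r x y + q y.
Proof. rewrite qD rNr rNl rNr opprK; ring. Qed.
Lemma qN x : q (- x) = q x.
Proof. by rewrite rNl rNr opprK. Qed.
Lemma qZ (c : R) x : q ((c%:C)%C *: x) = c ^+ 2 * q x.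
Proof. rewrite rZl rZr; ring. Qed.
Lemma para x y : q (x + y) + q (x - y) = 2 * q x + 2 * q y.
Proof. rewrite qD qB; ring. Qed.

Lemma CS x y : r x y ^+ 2 <= q x * q y.
Proof.
have h := q_ge0 ((q y)%:C%C *: x - (r x y)%:C%C *: y).
rewrite qB !qZ rZl rZr in h.
have [/q_eq0 -> | ] := eqVneq (q y) 0.
  by rewrite ip0r ip0l cRe0 expr0n /= mulr0.
move=> hy.
have hp : 0 < q y by rewrite lt_neqAle eq_sym hy q_ge0.
have : 0 <= q y * (q y * q x - r x y ^+ 2).
  suff -> : q y * (q y * q x - r x y ^+ 2) = q y ^+ 2 * q x - 2 * (q y * (r x y * r x y)) + r x y ^+ 2 * q y by [].
  ring.
by rewrite pmulr_rge0 // subr_ge0 mulrC.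
Qed.

Lemma hnE x : hn x = Num.sqrt (q x). Proof. by []. Qed.
Lemma hn_ge0 x : 0 <= hn x. Proof. exact: sqrtr_ge0. Qed.
Lemma hn_sq x : hn x ^+ 2 = q x. Proof. by rewrite hnE sqr_sqrtr // q_ge0. Qed.

Lemma r_le x y : r x y <= hn x * hn y.
Proof.
have h := CS x y; rewrite -!hn_sq in h.
have hP := mulr_ge0 (hn_ge0 x) (hn_ge0 y).
rewrite -exprMn in h; exact: sq_le h hP.
Qed.
Lemma r_abs x y : `|r x y| <= hn x * hn y.
Proof.
rewrite ler_norml r_le andbT lerNl -rNr.
by apply: le_trans (r_le _ _) _; rewrite /hnorm qN.
Qed.
Lemma hnD x y : hn (x + y) <= hn x + hn y.
Proof.
have h := r_le x y.
have e : hn (x + y) ^+ 2 <= (hn x + hn y) ^+ 2.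
  rewrite hn_sq qD -!hn_sq; nra.
have := hn_ge0 (x + y); have := hn_ge0 x; have := hn_ge0 y; nra.
Qed.
Lemma qZc a x : q (a *: x) = (complex.Re a ^+ 2 + complex.Im a ^+ 2) * q x.
Proof. rewrite ipZl ipZr ip_diag; cE; ring. Qed.
Lemma hnZ a x : hn (a *: x) = Num.sqrt (complex.Re a ^+ 2 + complex.Im a ^+ 2) * hn x.
Proof. by rewrite hnE qZc sqrtrM // addr_ge0 // sqr_ge0. Qed.
Lemma hnN x : hn (- x) = hn x.
Proof. by rewrite /hnorm qN. Qed.
Lemma hn_lt x e : 0 < e -> (hn x < e) = (q x < e ^+ 2).
Proof.
move=> he.
have -> : (q x < e ^+ 2) = (Num.sqrt (q x) < Num.sqrt (e ^+ 2)) by rewrite ltr_sqrt // exprn_gt0.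
by rewrite sqrtr_sqr gtr0_norm.
Qed.

Hypothesis HCm : ip_complete ip.

Lemma riesz_real (g : V -> R)
  (glin : forall (c : R) x y, g ((c%:C)%C *: x + y) = c * g x + g y)
  (gbd : exists K, forall x, g x ^+ 2 <= K * q x) :
  exists z, forall x, g x = r x z.
Proof.
have g0 : g 0 = 0.
  have := glin 1 0 0; rewrite scaler0 addr0 mul1r -{1}[g 0]addr0.
  by move/addrI.
have gZ c x : g ((c%:C)%C *: x) = c * g x.
  by rewrite -[_ *: x]addr0 glin g0 addr0.
have gD x y : g (x + y) = g x + g y.
  by have := glin 1 x y; rewrite mul1r; have -> : ((1 : R)%:C)%C = 1 :> R[i] by []; rewrite scale1r.
have gN x : g (- x) = - g x.
  have := gZ (-1) x; have -> : ((-1 : R)%:C)%C = -1 :> R[i] by rewrite rmorphN1.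
  by rewrite scaleN1r mulN1r.
have gB x y : g (x - y) = g x - g y by rewrite gD gN.
case: (pselect (exists u, g u != 0)); last first.
  move=> hn0; exists 0 => x; rewrite ip0r cRe0.
  by case: (eqVneq (g x) 0) => // h; exfalso; apply: hn0; exists x.
case=> u gu.
pose u1 := (((g u)^-1)%:C)%C *: u.
have gu1 : g u1 = 1 by rewrite gZ mulVf.
pose E : set R := fun t => exists x, g x = 1 /\ t = q x.
have hE : has_inf E.
  split; first by exists (q u1); exists u1.
  by exists 0 => t [x [_ ->]]; exact: q_ge0.
pose D := inf E.
have F1 x : g x = 1 -> D <= q x.
  by move=> h; apply: ge_inf; [case: hE | exists x].
have F2 e : 0 < e -> exists x, g x = 1 /\ q x < D + e.
  by move=> he; have [t [x [h ->]] ht] := inf_adherent he hE; exists x.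
have [xs hxs] : exists xs : nat -> V, forall n, g (xs n) = 1 /\ q (xs n) < D + eps n.
  by have [f hf] := choice (fun n => F2 _ (eps_gt0 n)); exists f.
have cau m k : q (xs m - xs k) <= 2 * eps m + 2 * eps k.
  have hp := para (xs m) (xs k).
  have hmid : g ((2^-1 : R)%:C%C *: (xs m + xs k)) = 1.
    by rewrite gZ gD (hxs m).1 (hxs k).1 mulVf // pnatr_eq0.
  have := F1 _ hmid; rewrite qZ.
  have := (hxs m).2; have := (hxs k).2.
  have h4 : (2^-1 : R) ^+ 2 = 4^-1 by field.
  rewrite h4; lra.
have [w hw] : exists w, forall e, 0 < e -> exists n, forall m, (n <= m)%N -> q (xs m - w) < e.
  have hc : forall e : R, 0 < e -> exists n : nat, forall m k : nat,
      (n <= m)%N -> (n <= k)%N -> hn (xs m - xs k) < e.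
    move=> e he; have [n0 hn0] := @eps_small R (e ^+ 2 / 4) (divr_gt0 (exprn_gt0 2 he) (ltr0Sn _ 3)).
    exists n0 => m k hm hk; rewrite hn_lt //.
    apply: le_lt_trans (cau m k) _.
    have := eps_le (R:=R) hm; have := eps_le (R:=R) hk; lra.
  have [w hw] := HCm xs hc.
  exists w => e he; have hs : 0 < Num.sqrt e by rewrite sqrtr_gt0.
  have [n hn] := hw _ hs; exists n => m hm.
  by have := hn m hm; rewrite hn_lt // sqr_sqrtr // ltW.
have [K hK] := gbd.
have gw : g w = 1.
  apply/eqP; rewrite eq_sym -subr_eq0; apply/negPn/negP => hne.
  have ha : 0 < (1 - g w) ^+ 2 by rewrite exprn_even_gt0 //.
  have hKn : 0 < `|K| + 1 by rewrite ltr_wpDl.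
  have [n hn] := hw _ (divr_gt0 ha hKn).
  have h1 := hn n (leqnn n); have h2 := hK (xs n - w); rewrite gB (hxs n).1 in h2.
  have h3 := q_ge0 (xs n - w); have h4 := ler_norm K; have h5 := normr_ge0 K.
  have hee := divr_gt0 ha hKn.
  have e1 : (`|K| + 1) * ((1 - g w) ^+ 2 / (`|K| + 1)) = (1 - g w) ^+ 2.
    by rewrite mulrC divfK // gt_eqF.
  move: h1 h2 h3 h4 h5 hee e1.
  set a := (1 - g w) ^+ 2; set ee := a / _; set Kp := `|K|; set qv := q _.
  nra.
have qw : q w <= D.
  have key n : q w <= D + 2 * eps n + 2 * q (xs n - w).
    have hp := para (xs n) (w - xs n).
    have e0 : xs n + (w - xs n) = w by rewrite addrC subrK.
    rewrite e0 in hp.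
    have hD : D <= q (xs n - (w - xs n)).
      by apply: F1; rewrite gB gB gw (hxs n).1 subrr subr0.
    have e2 : q (w - xs n) = q (xs n - w) by rewrite -qN opprB.
    rewrite e2 in hp.
    have := (hxs n).2; lra.
  rewrite leNgt; apply/negP => hlt.
  have hb : 0 < (q w - D) / 4 by rewrite divr_gt0 // subr_gt0.
  have [n1 hn1] := eps_small _ hb; have [n2 hn2] := hw _ hb.
  have := key (maxn n1 n2); have := hn2 _ (leq_maxr n1 n2).
  have := eps_le (R:=R) (leq_maxl n1 n2); lra.
have orth k : g k = 0 -> r w k = 0.
  move=> gk.
  have ht t : 0 <= 2 * t * r w k + t ^+ 2 * q k.
    have := F1 (w + (t%:C)%C *: k); rewrite gD gZ gk mulr0 addr0 gw => /(_ erefl).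
    rewrite qD rZr qZ; lra.
  have hk := q_ge0 k.
  have hs : 0 < (q k + 1)^-1 by rewrite invr_gt0 ltr_wpDl.
  have hs1 : (q k + 1)^-1 * (q k + 1) = 1 by rewrite mulVf // gt_eqF // ltr_wpDl.
  have := ht (- r w k * (q k + 1)^-1).
  move: hs hs1; generalize (q k + 1)^-1 => s hs hs1 h.
  have h2 : r w k ^+ 2 * s * (1 + s) <= 0 by nra.
  have hP : 0 < s * (1 + s) by apply: mulr_gt0 => //; lra.
  have : r w k ^+ 2 <= 0.
    rewrite -mulrA in h2; move: h2 hP; generalize (s * (1 + s)) (r w k ^+ 2) => P t; nra.
  by move=> h3; apply/eqP; rewrite -sqrf_eq0 eq_le h3 sqr_ge0.
have qw0 : q w != 0.
  by apply/eqP => /q_eq0 h; move: gw; rewrite h g0 => /eqP; rewrite eq_sym oner_eq0.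
exists (((q w)^-1)%:C%C *: w) => x.
have := orth (x - ((g x)%:C)%C *: w); rewrite gB gZ gw mulr1 subrr => /(_ erefl).
rewrite rDr rNr rZr rZr rsym => /eqP; rewrite subr_eq0 => /eqP ->.
by rewrite mulrCA mulVf // mulr1.
Qed.

Lemma vec_eq u v : (forall x, ip x u = ip x v) -> u = v.
Proof.
move=> h; apply/eqP; rewrite -subr_eq0; apply/eqP; apply: ip_def.
by rewrite ipBr h subrr.
Qed.

Section Ops.
Variable T : V -> V.
Hypothesis HT : bounded_op ip T.
Lemma Tlin a x y : T (a *: x + y) = a *: T x + T y.
Proof. by case: HT => h _; apply: h. Qed.
Lemma T0 : T 0 = 0.
Proof.
have := Tlin 1 0 0; rewrite scaler0 addr0 scale1r -{1}[T 0]addr0.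
by move/addrI.
Qed.
Lemma TZ a x : T (a *: x) = a *: T x.
Proof. by rewrite -[a *: x]addr0 Tlin T0 addr0. Qed.
Lemma Tq : exists M, 0 <= M /\ forall x, q (T x) <= M * q x.
Proof.
case: HT => _ [M hM]; exists (M ^+ 2); split; first exact: sqr_ge0.
move=> x; rewrite -!hn_sq; have h := hM x; have h0 := hn_ge0 (T x).
have h1 := hn_ge0 x; rewrite -exprMn.
move: h h0 h1; generalize (hn (T x)) (hn x) => a b; nra.
Qed.

Lemma adj_exists : exists S, is_adjoint ip T S.
Proof.
have [M [hM0 hM]] := Tq.
have hy y : exists z, forall x, ip (T x) y = ip x z.
  pose g := fun x => complex.Re (ip (T x) y).
  have hg1 : forall (c : R) x y', g ((c%:C)%C *: x + y') = c * g x + g y'.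
    by move=> c x y'; rewrite /g Tlin ipL; cE; rewrite mul0r subr0.
  have hg2 : exists K, forall x, g x ^+ 2 <= K * q x.
    exists (M * q y) => x.
    apply: le_trans (CS _ _) _.
    rewrite mulrAC mulrC [M * _ * _]mulrC; apply: ler_wpM2l; [exact: q_ge0 | exact: hM].
  have [z hz] := @riesz_real g hg1 hg2.
  exists z => x; apply: cext; first exact: hz.
  have := hz ('i%C *: x); rewrite /g TZ !ipZl; cE; rewrite !mul0r !mul1r !sub0r.
  by move/eqP; rewrite eqr_opp => /eqP.
have [S hS] := choice hy; exists S => x y; exact: hS.
Qed.

Lemma adjointP : is_adjoint ip T (adjoint ip T).
Proof.
rewrite /adjoint; case: pselect => [h|h]; first exact: (projT2 (cid h)).
by exfalso; apply: h; exact: adj_exists.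
Qed.

Lemma adj_bounded S : is_adjoint ip T S -> bounded_op ip S.
Proof.
move=> hS; split.
  move=> a x y; apply: vec_eq => z.
  by rewrite -hS !ipDr !ipZr !hS.
case: HT => _ [M hM]; exists `|M| => y.
have e : q (S y) = r (T (S y)) y by rewrite hS.
have h1 := r_le (T (S y)) y; have h2 := hM (S y).
rewrite -e -hn_sq in h1.
have h3 := hn_ge0 (S y); have h4 := hn_ge0 y; have h5 := hn_ge0 (T (S y)).
have h6 := ler_norm M; have h7 := normr_ge0 M.
move: h1 h2 h3 h4 h5 h6 h7; set P := `|M|.
generalize (hn (S y)) (hn y) (hn (T (S y))) => a b c h1 h2 h3 h4 h5 h6 h7.
have h8 : c <= P * a by nra.
have h9 : a ^+ 2 <= (P * b) * a by nra.
have h10 : 0 <= P * b by exact: mulr_ge0.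
exact: sq_le2 h9 h10 h3.
Qed.
End Ops.

Lemma adj_unique {T S1 S2} : is_adjoint ip T S1 -> is_adjoint ip T S2 -> S1 = S2.
Proof.
move=> h1 h2; apply: funext => y; apply: vec_eq => x; by rewrite -h1 h2.
Qed.

Lemma bo_add S T : bounded_op ip S -> bounded_op ip T -> bounded_op ip (opadd S T).
Proof.
move=> hS hT; split.
  move=> a x y; rewrite /opadd (Tlin _ hS) (Tlin _ hT) scalerDr.
  by rewrite -!addrA; congr (_ + _); rewrite addrCA.
case: hS => _ [M1 h1]; case: hT => _ [M2 h2]; exists (M1 + M2) => x.
apply: le_trans (hnD _ _) _; rewrite mulrDl; exact: lerD.
Qed.

Lemma bo_scale a T : bounded_op ip T -> bounded_op ip (opscale a T).
Proof.
move=> hT; split.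
  move=> b x y; rewrite /opscale (Tlin _ hT) scalerDr !scalerA mulrC //.
case: hT => _ [M h]; exists (Num.sqrt (complex.Re a ^+ 2 + complex.Im a ^+ 2) * M) => x.
rewrite /opscale hnZ -mulrA; apply: ler_wpM2l; [exact: sqrtr_ge0 | exact: h].
Qed.

Lemma adjoint_add S T : bounded_op ip S -> bounded_op ip T ->
  adjoint ip (opadd S T) = opadd (adjoint ip S) (adjoint ip T).
Proof.
move=> hS hT; apply: (adj_unique (adjointP _ (bo_add _ _ hS hT))) => x y.
by rewrite /opadd ipDl ipDr (adjointP _ hS) (adjointP _ hT).
Qed.

Lemma adjoint_scale a T : bounded_op ip T ->
  adjoint ip (opscale a T) = opscale (Num.conj a) (adjoint ip T).
Proof.
move=> hT; apply: (adj_unique (adjointP _ (bo_scale a _ hT))) => x y.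
by rewrite /opscale ipZl ipZr conjCK (adjointP _ hT).
Qed.

Lemma adjoint_bounded T : bounded_op ip T -> bounded_op ip (adjoint ip T).
Proof. by move=> hT; apply: (adj_bounded _ hT); exact: adjointP. Qed.
End IP.
Lemma expiD {R : realType} (t u : R) : expi t * expi u = expi (t + u).
Proof. by apply: cext; rewrite /expi ?cReM ?cImM /= ?cosD ?sinD; ring. Qed.

Lemma nexp {R : realType} (t : R) : complex.Re `|expi t| = 1.
Proof. by rewrite cReN_norm /= cos2Dsin2 sqrtr1. Qed.

Lemma nconj {R : realType} (a : R[i]) : complex.Re `|Num.conj a| = complex.Re `|a|.
Proof. by rewrite !cReN_norm cReJ cImJ sqrrN. Qed.

Lemma nge0 {R : realType} (a : R[i]) : 0 <= complex.Re `|a|.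
Proof. by rewrite cReN_norm sqrtr_ge0. Qed.

Lemma nl1 {R : realType} (a b : R[i]) : `|a| ^+ 2 + `|b| ^+ 2 <= 1 -> complex.Re `|a| <= 1.
Proof.
rewrite !cnorm -!rmorphXn -rmorphD -[1 : R[i]]/((1 : R)%:C)%C lecR.
set x := Num.sqrt _; set y := Num.sqrt _ => h.
have hx : 0 <= x := sqrtr_ge0 _; have hy : 0 <= y := sqrtr_ge0 _.
rewrite /=; nra.
Qed.

Theorem theorem2p11 (R : realType) (V : lmodType R[i]) (ip : V -> V -> R[i])
  (HH : is_hilbert ip) (N : (V -> V) -> R) (HN : is_op_norm ip N)
  (B C : V -> V) (HB : bounded_op ip B) (HC : bounded_op ip C) (theta : R) :
  2^-1 * wN ip N (opadd B (opscale (expi theta) C))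
    + 2^-1 * `|wN ip N B - wN ip N C| <= wNe ip N B C.
Proof.
case: HH => HI HCm.
move: HN; rewrite /is_op_norm => -[N0 Ndef NZ Nadd].
pose c := complex.Re `|((2%:R : R[i])^-1)|.
have c0 : 0 <= c := nge0 _.
have ReE T : ReOp ip T = opscale (2%:R^-1) (opadd T (adjoint ip T)) by [].
have bRe T : bounded_op ip T -> bounded_op ip (ReOp ip T).
  move=> hT; rewrite ReE; apply: (bo_scale _ HI); apply: (bo_add _ HI) => //.
  exact: (adjoint_bounded _ HI HCm).
have NRe T : bounded_op ip T -> N (ReOp ip T) <= c * (N T + N (adjoint ip T)).
  move=> hT; rewrite ReE.
  rewrite NZ; last by apply: (bo_add _ HI) => //; exact: (adjoint_bounded _ HI HCm).
  apply: ler_wpM2l => //; apply: Nadd => //; exact: (adjoint_bounded _ HI HCm).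
have ReAdd S T : bounded_op ip S -> bounded_op ip T ->
    ReOp ip (opadd S T) = opadd (ReOp ip S) (ReOp ip T).
  move=> hS hT; rewrite !ReE (adjoint_add _ HI HCm _ _ hS hT); apply: funext => x.
  by rewrite /opadd /opscale -scalerDr addrACA.
have Nb (a b e : R[i]) S U : bounded_op ip S -> bounded_op ip U ->
    complex.Re `|a| <= 1 -> complex.Re `|b| <= 1 -> complex.Re `|e| <= 1 ->
    N (opscale e (opadd (opscale a S) (opscale b U))) <= N S + N U.
  move=> hS hU ha hb he.
  have hSa := bo_scale _ HI a _ hS; have hUb := bo_scale _ HI b _ hU.
  rewrite NZ; last exact: (bo_add _ HI).
  have h1 := Nadd _ _ hSa hUb; rewrite !NZ // in h1.
  have := N0 _ hS; have := N0 _ hU; have := nge0 e; have := nge0 a; have := nge0 b.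
  have : 0 <= N (opadd (opscale a S) (opscale b U)) by apply: N0; exact: (bo_add _ HI).
  move: h1; set P := N (opadd _ _); set ea := complex.Re `|e|; set aa := complex.Re `|a|;
    set bb := complex.Re `|b|; set ns := N S; set nu := N U; nra.
pose M0 := c * (N B + N C + N (adjoint ip B) + N (adjoint ip C)).
have bnd l1 l2 t : `|l1| ^+ 2 + `|l2| ^+ 2 <= 1 ->
    N (ReOp ip (opscale (expi t) (opadd (opscale l1 B) (opscale l2 C)))) <= M0.
  move=> hl.
  have hl1 := @nl1 _ l1 l2 hl; have hl2 : complex.Re `|l2| <= 1 by apply: (@nl1 _ l2 l1); rewrite addrC.
  have hT : bounded_op ip (opscale (expi t) (opadd (opscale l1 B) (opscale l2 C))).
    by apply: (bo_scale _ HI); apply: (bo_add _ HI); apply: (bo_scale _ HI).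
  apply: le_trans (NRe _ hT) _; rewrite /M0; apply: ler_wpM2l => //.
  rewrite (adjoint_scale _ HI HCm); last by apply: (bo_add _ HI); apply: (bo_scale _ HI).
  rewrite (adjoint_add _ HI HCm); try by apply: (bo_scale _ HI).
  rewrite !(adjoint_scale _ HI HCm) //.
  have he1 : complex.Re `|expi t| <= 1 by rewrite nexp.
  have := Nb _ _ _ _ _ HB HC hl1 hl2 he1.
  have hBs := adjoint_bounded _ HI HCm _ HB; have hCs := adjoint_bounded _ HI HCm _ HC.
  have := Nb (Num.conj l1) (Num.conj l2) (Num.conj (expi t)) _ _ hBs hCs.
  rewrite !nconj nexp => /(_ hl1 hl2 (lexx 1)).
  lra.
have hubW : has_ubound (fun r : R => exists (l1 l2 : R[i]) (t : R),
    `|l1| ^+ 2 + `|l2| ^+ 2 <= 1 /\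
    r = N (ReOp ip (opscale (expi t) (opadd (opscale l1 B) (opscale l2 C))))).
  by exists M0 => r [l1 [l2 [t [hl ->]]]]; exact: bnd.
have n10 : `|1 : R[i]| ^+ 2 + `|0 : R[i]| ^+ 2 <= 1 by rewrite normr1 normr0 expr1n expr0n addr0.
have n01 : `|0 : R[i]| ^+ 2 + `|1 : R[i]| ^+ 2 <= 1 by rewrite normr1 normr0 expr1n expr0n add0r.
have WB t : N (ReOp ip (opscale (expi t) B)) <= wNe ip N B C.
  apply: (ub_le_sup hubW); exists 1, 0, t; split => //.
  have -> : opadd (opscale 1 B) (opscale 0 C) = B.
    by apply: funext => x; rewrite /opadd /opscale scale1r scale0r addr0.
  by [].
have WC t : N (ReOp ip (opscale (expi t) C)) <= wNe ip N B C.
  apply: (ub_le_sup hubW); exists 0, 1, t; split => //.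
  have -> : opadd (opscale 0 B) (opscale 1 C) = C.
    by apply: funext => x; rewrite /opadd /opscale scale1r scale0r add0r.
  by [].
have wB : wN ip N B <= wNe ip N B C.
  apply: ge_sup; first by exists (N (ReOp ip (opscale (expi 0) B))); exists 0.
  by move=> y [t _ <-]; exact: WB.
have wC : wN ip N C <= wNe ip N B C.
  apply: ge_sup; first by exists (N (ReOp ip (opscale (expi 0) C))); exists 0.
  by move=> y [t _ <-]; exact: WC.
have ubB : has_ubound [set N (ReOp ip (opscale (expi t) B)) | t in [set: R]].
  by exists (wNe ip N B C) => y [t _ <-]; exact: WB.
have ubC : has_ubound [set N (ReOp ip (opscale (expi t) C)) | t in [set: R]].
  by exists (wNe ip N B C) => y [t _ <-]; exact: WC.
have wS : wN ip N (opadd B (opscale (expi theta) C)) <= wN ip N B + wN ip N C.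
  apply: ge_sup.
    by exists (N (ReOp ip (opscale (expi 0) (opadd B (opscale (expi theta) C))))); exists 0.
  move=> y [t _ <-].
  have -> : opscale (expi t) (opadd B (opscale (expi theta) C))
      = opadd (opscale (expi t) B) (opscale (expi (t + theta)) C).
    by apply: funext => x; rewrite /opadd /opscale scalerDr scalerA expiD.
  have hB1 := bo_scale _ HI (expi t) _ HB; have hC1 := bo_scale _ HI (expi (t + theta)) _ HC.
  rewrite ReAdd //; apply: le_trans (Nadd _ _ (bRe _ hB1) (bRe _ hC1)) _.
  apply: lerD.
    by apply: (ub_le_sup ubB); exists t.
  by apply: (ub_le_sup ubC); exists (t + theta).
move: wB wC wS; set a := wN ip N B; set b := wN ip N C; set s := wN ip N _; set W := wNe ip N B C.
move=> wB wC wS.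
have [h|h] := lerP 0 (a - b).
  rewrite ger0_norm //; lra.
rewrite ltr0_norm //; lra.
Qed.
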